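(* Consider the modified Ghaffari process described in the context, with marking decisions in each phase that are only pairwise independent. If phase $t$ is a type-1 golden phase for an undecided node $v$, i.e., $p_t(v)=1/4$ and $d_t(v)\le 1/2$, then $v$ joins the independent set in phase $t$ (i.e., $v$ is marked and none of its undecided neighbors is marked) with probability at least $1/8$.
   Context: Let $G=(V,E)$ be an undirected graph. The process runs in phases $t=0,1,2,\dots$ on the graph induced by the undecided nodes (initially all nodes); $N(v)$ denotes the set of undecided neighbors of $v$. Each undecided node $v$ has a value $p_t(v)$, with $p_0(v)=1/4$; its effective degree is $d_t(v)=\sum_{u\in N(v)}p_t(u)$. Then $p_{t+1}(v)=p_t(v)/2$ if $d_t(v)\ge 1/2$, and $p_{t+1}(v)=\min\{2p_t(v),1/4\}$ if $d_t(v)<1/2$. In phase $t$, each undecided node $v$ becomes marked with probability $p_t(v)$, where the marking events of the nodes in phase $t$ are pairwise independent (given the state at the start of the phase); a marked node none of whose undecided neighbors is marked joins the independent set, and it and all its neighbors are removed. *)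

(* Defs.v *)
From mathcomp Require Import all_boot all_order all_algebra.
Set Implicit Arguments. Unset Strict Implicit. Unset Printing Implicit Defensive.
Import Order.TTheory GRing.Theory Num.Theory.
Local Open Scope ring_scope.

Definition simple_graph (T : finType) (e : rel T) : Prop :=
  (forall x y, e x y = e y x) /\ (forall x, ~~ e x x).

Definition is_distr (R : numDomainType) (Omega : finType) (P : Omega -> R) : Prop :=
  (forall w, 0 <= P w) /\ \sum_(w : Omega) P w = 1.

Definition Pr (R : numDomainType) (Omega : finType) (P : Omega -> R)
  (A : pred Omega) : R := \sum_(w : Omega | A w) P w.

Definition eff_deg (R : numDomainType) (T : finType) (e : rel T) (U : {set T})
  (p : T -> R) (v : T) : R := \sum_(u in U | e v u) p u.

Definition pairwise_indep_marking (R : numDomainType) (T : finType) (U : {set T})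
  (p : T -> R) (Omega : finType) (P : Omega -> R) (mark : Omega -> T -> bool) : Prop :=
  (forall v, v \in U -> Pr P (fun w => mark w v) = p v) /\
  (forall u v, u \in U -> v \in U -> u != v ->
     Pr P (fun w => mark w u && mark w v) = p u * p v).

Definition joins (T : finType) (e : rel T) (U : {set T}) (Omega : finType)
  (mark : Omega -> T -> bool) (v : T) (w : Omega) : bool :=
  mark w v && [forall u, ((u \in U) && e v u) ==> ~~ mark w u].

(* Main.v *)
Require Import Defs.
From mathcomp Require Import all_boot all_order all_algebra.
From mathcomp Require Import lra.
Import Order.TTheory GRing.Theory Num.Theory.
Local Open Scope ring_scope.

Lemma PrE (R : realFieldType) (Omega : finType) (P : Omega -> R) (A : pred Omega) :
  Pr P A = \sum_w P w * (A w)%:R.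
Proof.
rewrite /Pr big_mkcond /=; apply: eq_bigr => w _.
by case: (A w); rewrite ?mulr1 ?mulr0.
Qed.

Theorem lemma3 (R : realFieldType) (T : finType) (e : rel T) (U : {set T})
  (p : T -> R) (Omega : finType) (P : Omega -> R) (mark : Omega -> T -> bool)
  (v : T) :
  simple_graph e ->
  (forall u, u \in U -> 0 <= p u <= 1) ->
  is_distr P ->
  pairwise_indep_marking U p P mark ->
  v \in U ->
  p v = 1 / 4 ->
  eff_deg e U p v <= 1 / 2 ->
  1 / 8 <= Pr P (joins e U mark v).
Proof.
move=> [_ irr] hp [P0 _] [m1 m2] vU pv hd.
have key : forall w, (mark w v)%:R - \sum_(u in U | e v u) ((mark w v && mark w u)%:R : R)
   <= (joins e U mark v w)%:R.
  move=> w; rewrite /joins.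
  case mv: (mark w v) => /=; last first.
    by rewrite big1 ?subr0 // => u _.
  case: forallP => [_|/forallP].
    by rewrite lerBlDr lerDl sumr_ge0.
  rewrite negb_forall => /existsP [u]; rewrite negb_imply negbK => /andP [/andP [uU evu] mu].
  rewrite subr_le0 (bigD1 u) ?uU ?evu //= mu /= lerDl sumr_ge0 //.
have H : Pr P (fun w => mark w v) - \sum_(u in U | e v u) Pr P (fun w => mark w v && mark w u)
   <= Pr P (joins e U mark v).
  have -> : \sum_(u in U | e v u) Pr P (fun w => mark w v && mark w u)
     = \sum_(u in U | e v u) \sum_w P w * ((mark w v && mark w u)%:R : R).
    by apply: eq_bigr => u _; rewrite PrE.
  rewrite !PrE.
  rewrite exchange_big /= -sumrB; apply: ler_sum => w _.
  rewrite -mulr_sumr -mulrBr; apply: ler_wpM2l => //; exact: key.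
apply: le_trans H.
rewrite m1 //.
have -> : \sum_(u in U | e v u) Pr P (fun w => mark w v && mark w u) = p v * eff_deg e U p v.
  rewrite /eff_deg mulr_sumr; apply: eq_bigr => u /andP [uU evu].
  apply: m2 => //; apply/eqP => uv; move: evu; rewrite uv; apply/negP/irr.
rewrite pv.
have h0 : 0 <= eff_deg e U p v.
  by apply: sumr_ge0 => u /andP [uU _]; case/andP: (hp u uU).
lra.
Qed.
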